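(* Let $a\in C^\infty(\mathbb{R})$ satisfy condition (A). The function \[ q(\xi_1,\xi_2):=\frac{\xi_1a(\xi_1)+\xi_2a(\xi_2)}{\xi_1+\xi_2},\qquad(\xi_1,\xi_2)\in\mathbb{R}^2,\ \xi_1+\xi_2\ne0, \] extends to a smooth positive function on $\mathbb{R}^2$ (namely $q(\xi_1,\xi_2)=\int_0^1(\xi a(\xi))'(-\xi_2+(\xi_1+\xi_2)t)\,dt$). Moreover, with $\xi_{\max}:=|\xi_1|\vee|\xi_2|$: (i) $q(\xi_1,\xi_2)\sim a(\xi_{\max})$, and $|\partial_1^{\gamma_1}\partial_2^{\gamma_2}q(\xi_1,\xi_2)|\lesssim\langle\xi_1\rangle^{-\gamma_1}\langle\xi_2\rangle^{-\gamma_2}a(\xi_{\max})$ for $1\le\gamma_1+\gamma_2\le3$; (ii) $|\partial_1^{\gamma_1}\partial_2^{\gamma_2}(\partial_1-\partial_2)q(\xi_1,\xi_2)|\lesssim\langle\xi_1\rangle^{-\gamma_1}\langle\xi_2\rangle^{-\gamma_2}\langle\xi_{\max}\rangle^{-1}a(\xi_{\max})$ for $0\le\gamma_1+\gamma_2\le3$, for all $(\xi_1,\xi_2)\in\mathbb{R}^2$, with implicit constants depending only on those in (A).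
   Context: Condition (A) on $a$: $a$ is positive, even, non-decreasing on $[0,\infty)$, constant on $[-1,1]$; $a(2\xi)\lesssim a(\xi)$ for all $\xi>0$; $a(N_1)/a(N_2)\gtrsim(N_1/N_2)^{1/2}$ for all dyadic $N_1>N_2\ge1$ (dyadic meaning powers of $2$); $|\partial_\xi^ja(\xi)|\lesssim\langle\xi\rangle^{-j}a(\xi)$ for all $\xi\in\mathbb{R}$, $1\le j\le5$, where $\langle\xi\rangle=(1+\xi^2)^{1/2}$. $A\sim B$ means $A\lesssim B\lesssim A$. *)

(* Defs.v *)
From Stdlib Require Import Reals List.
From Coquelicot Require Import Coquelicot.
Open Scope R_scope.

Definition jbr (x : R) : R := sqrt (1 + x ^ 2).

Definition smooth1 (a : R -> R) : Prop :=
  forall (n : nat) (x : R), ex_derive (Derive_n a n) x.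

(* Condition (A), with explicit constants:
   Cd for a(2xi) <~ a(xi), cdy for the dyadic lower bound,
   Cj for the symbol-type derivative bounds. *)
Definition condA (Cd cdy Cj : R) (a : R -> R) : Prop :=
  (forall x, 0 < a x) /\
  (forall x, a (- x) = a x) /\
  (forall x y, 0 <= x <= y -> a x <= a y) /\
  (forall x, -1 <= x <= 1 -> a x = a 0) /\
  (forall x, 0 < x -> a (2 * x) <= Cd * a x) /\
  (forall k1 k2 : nat, (k2 < k1)%nat ->
      cdy * sqrt (2 ^ k1 / 2 ^ k2) <= a (2 ^ k1) / a (2 ^ k2)) /\
  (forall (j : nat) (x : R), (1 <= j <= 5)%nat ->
      Rabs (Derive_n a j x) <= Cj * a x / jbr x ^ j).

(* Iterated partial derivatives of f : R -> R -> R.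
   [dpart ds f]: the head of ds is the outermost derivative;
   true = d/dxi_1, false = d/dxi_2. *)
Fixpoint dpart (ds : list bool) (f : R -> R -> R) : R -> R -> R :=
  match ds with
  | nil => f
  | true :: ds' => fun x y => Derive (fun s => dpart ds' f s y) x
  | false :: ds' => fun x y => Derive (fun t => dpart ds' f x t) y
  end.

Definition D12 (g1 g2 : nat) (f : R -> R -> R) : R -> R -> R :=
  dpart (repeat true g1 ++ repeat false g2) f.

Definition smooth2 (f : R -> R -> R) : Prop :=
  forall ds : list bool,
    (forall x y, ex_derive (fun s => dpart ds f s y) x /\
                 ex_derive (fun t => dpart ds f x t) y) /\
    (forall x y, continuous (fun p : R * R => dpart ds f (fst p) (snd p)) (x, y)).

Definition ximax (x y : R) : R := Rmax (Rabs x) (Rabs y).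

(* Main.v *)
Require Import Defs.
From Stdlib Require Import Reals List Lra Lia.
From Coquelicot Require Import Coquelicot.
Open Scope R_scope.

Definition ell (x y t : R) : R := - y + (x + y) * t.
Definition pp (n1 n2 : nat) (t : R) : R := t ^ n1 * (t - 1) ^ n2.
Definition P (F : R -> R) (k n1 n2 : nat) (x y : R) : R :=
  RInt (fun t => pp n1 n2 t * Derive_n F (k + S (n1 + n2)) (ell x y t)) 0 1.

Lemma cont_Dn (F : R -> R) : smooth1 F -> forall n x, continuous (Derive_n F n) x.
Proof. intros HF n x. apply (@ex_derive_continuous R_AbsRing R_NormedModule), HF. Qed.

Lemma cont_pp n1 n2 t : continuous (pp n1 n2) t.
Proof. apply (@ex_derive_continuous R_AbsRing R_NormedModule). unfold pp. auto_derive. auto. Qed.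

Lemma cont_ell x y t : continuous (ell x y) t.
Proof. apply (@ex_derive_continuous R_AbsRing R_NormedModule). unfold ell. auto_derive. auto. Qed.

Lemma cont_integrand (F : R -> R) (q : R -> R) m x y t : smooth1 F -> continuous q t ->
  continuous (fun t => q t * Derive_n F m (ell x y t)) t.
Proof.
  intros HF Hq.
  apply (continuous_mult q (fun t => Derive_n F m (ell x y t))); auto.
  apply (continuous_comp (ell x y) (Derive_n F m)). apply cont_ell. apply cont_Dn; auto.
Qed.

Lemma exRInt_integrand (F : R -> R) (q : R -> R) m x y a b : smooth1 F -> (forall t, continuous q t) ->
  ex_RInt (fun t => q t * Derive_n F m (ell x y t)) a b.
Proof.
  intros HF Hq. apply (@ex_RInt_continuous R_CompleteNormedModule). intros. apply cont_integrand; auto.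
Qed.

Lemma cont2d_of_cont (f : R -> R) (g : R -> R -> R) x y :
  (forall z, continuous f z) -> continuity_2d_pt g x y ->
  continuity_2d_pt (fun u v => f (g u v)) x y.
Proof.
  intros Hf Hg. apply continuity_1d_2d_pt_comp; auto.
  apply continuity_pt_filterlim. apply Hf.
Qed.

Lemma is_derive_Dn_lin (F : R -> R) m b c u :
  smooth1 F ->
  is_derive (fun z => Derive_n F m (b + z * c)) u (c * Derive_n F (S m) (b + u * c)).
Proof.
  intros HF.
  assert (H1 : is_derive (fun z => b + z * c) u c).
  { auto_derive; auto; ring. }
  assert (H2 : is_derive (Derive_n F m) (b + u * c) (Derive_n F (S m) (b + u * c))).
  { simpl. apply Derive_correct. apply HF. }
  pose proof (is_derive_comp (Derive_n F m) (fun z => b + z * c) u _ _ H2 H1) as H3.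
  exact H3.
Qed.

Lemma is_derive_param (F : R -> R) m (w b c : R -> R) u0 :
  smooth1 F -> (forall t, continuous w t) -> (forall t, continuous b t) -> (forall t, continuous c t) ->
  is_derive (fun u => RInt (fun t => w t * Derive_n F m (b t + u * c t)) 0 1) u0
    (RInt (fun t => w t * (c t * Derive_n F (S m) (b t + u0 * c t))) 0 1).
Proof.
  intros HF Hw Hb Hc.
  assert (HD : forall u v, Derive (fun z => w v * Derive_n F m (b v + z * c v)) u
                          = w v * (c v * Derive_n F (S m) (b v + u * c v))).
  { intros u v. apply is_derive_unique.
    apply (is_derive_scal (fun z => Derive_n F m (b v + z * c v))).
    apply is_derive_Dn_lin; auto. }
  pose proof (is_derive_RInt_param (fun u t => w t * Derive_n F m (b t + u * c t)) 0 1 u0) as H.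
  rewrite (RInt_ext (fun t => w t * (c t * Derive_n F (S m) (b t + u0 * c t)))
             (fun t => Derive (fun u => w t * Derive_n F m (b t + u * c t)) u0)).
  2:{ intros; rewrite HD; reflexivity. }
  apply H.
  - apply filter_forall. intros x0 t _. eexists. apply (is_derive_scal (fun z => Derive_n F m (b t + z * c t))).
    apply is_derive_Dn_lin; auto.
  - intros t _. apply continuity_2d_pt_ext with (f := fun u v => w v * (c v * Derive_n F (S m) (b v + u * c v))).
    { intros; rewrite HD; reflexivity. }
    apply continuity_2d_pt_mult.
    + apply (cont2d_of_cont w (fun u v => v)); auto. apply continuity_2d_pt_id2.
    + apply continuity_2d_pt_mult.
      * apply (cont2d_of_cont c (fun u v => v)); auto. apply continuity_2d_pt_id2.
      * apply (cont2d_of_cont (Derive_n F (S m)) (fun u v => b v + u * c v)).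
        { apply cont_Dn; auto. }
        apply continuity_2d_pt_plus.
        { apply (cont2d_of_cont b (fun u v => v)); auto. apply continuity_2d_pt_id2. }
        apply continuity_2d_pt_mult. apply continuity_2d_pt_id1.
        apply (cont2d_of_cont c (fun u v => v)); auto. apply continuity_2d_pt_id2.
  - apply filter_forall. intros y0.
    apply (@ex_RInt_continuous R_CompleteNormedModule). intros z _.
    apply (continuous_mult w (fun t => Derive_n F m (b t + y0 * c t))); auto.
    apply (continuous_comp (fun t => b t + y0 * c t) (Derive_n F m)).
    2: apply cont_Dn; auto.
    apply (continuous_plus b (fun t => y0 * c t)); auto.
    apply (continuous_mult (fun _ => y0) c); auto. apply continuous_const.
Qed.

Lemma cont_poly_t : forall t, continuous (fun t : R => t) t.
Proof. intros. apply (@ex_derive_continuous R_AbsRing R_NormedModule). auto_derive. auto. Qed.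

Lemma dP1 (F : R -> R) k n1 n2 x y : smooth1 F ->
  is_derive (fun s => P F k n1 n2 s y) x (P F k (S n1) n2 x y).
Proof.
  intros HF. unfold P.
  eapply is_derive_ext.
  { intros s. apply RInt_ext. intros t _. unfold ell.
    replace (- y + (s + y) * t) with ((- y + y * t) + s * t) by ring. reflexivity. }
  replace (RInt (fun t => pp (S n1) n2 t * Derive_n F (k + S (S n1 + n2)) (ell x y t)) 0 1)
    with (RInt (fun t => pp n1 n2 t * (t * Derive_n F (S (k + S (n1 + n2))) ((- y + y * t) + x * t))) 0 1).
  2:{ apply RInt_ext. intros t _. unfold pp, ell.
      replace (k + S (S n1 + n2))%nat with (S (k + S (n1 + n2))) by lia.
      replace (- y + (x + y) * t) with ((- y + y * t) + x * t) by ring. simpl; ring. }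
  apply (is_derive_param F _ (pp n1 n2) (fun t => - y + y * t) (fun t => t)); auto.
  - apply cont_pp.
  - intros t. apply (@ex_derive_continuous R_AbsRing R_NormedModule). auto_derive. auto.
  - apply cont_poly_t.
Qed.

Lemma dP2 (F : R -> R) k n1 n2 x y : smooth1 F ->
  is_derive (fun s => P F k n1 n2 x s) y (P F k n1 (S n2) x y).
Proof.
  intros HF. unfold P.
  eapply is_derive_ext.
  { intros s. apply RInt_ext. intros t _. unfold ell.
    replace (- s + (x + s) * t) with ((x * t) + s * (t - 1)) by ring. reflexivity. }
  replace (RInt (fun t => pp n1 (S n2) t * Derive_n F (k + S (n1 + S n2)) (ell x y t)) 0 1)
    with (RInt (fun t => pp n1 n2 t * ((t - 1) * Derive_n F (S (k + S (n1 + n2))) ((x * t) + y * (t - 1)))) 0 1).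
  2:{ apply RInt_ext. intros t _. unfold pp, ell.
      replace (k + S (n1 + S n2))%nat with (S (k + S (n1 + n2))) by lia.
      replace (- y + (x + y) * t) with ((x * t) + y * (t - 1)) by ring. simpl; ring. }
  apply (is_derive_param F _ (pp n1 n2) (fun t => x * t) (fun t => t - 1)); auto.
  - apply cont_pp.
  - intros t. apply (@ex_derive_continuous R_AbsRing R_NormedModule). auto_derive. auto.
  - intros t. apply (@ex_derive_continuous R_AbsRing R_NormedModule). auto_derive. auto.
Qed.

Fixpoint cnt (b : bool) (ds : list bool) : nat :=
  match ds with nil => O | d :: ds' => if Bool.eqb d b then S (cnt b ds') else cnt b ds' end.

Lemma dpart_P (F : R -> R) k ds : smooth1 F -> forall n1 n2 x y,
  dpart ds (P F k n1 n2) x y = P F k (n1 + cnt true ds) (n2 + cnt false ds) x y.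
Proof.
  intros HF. induction ds as [|d ds IH]; intros n1 n2 x y.
  - simpl. rewrite !Nat.add_0_r. reflexivity.
  - destruct d; simpl.
    + rewrite (Derive_ext _ (fun s => P F k (n1 + cnt true ds) (n2 + cnt false ds) s y)).
      2:{ intros; apply IH. }
      rewrite (is_derive_unique _ _ _ (dP1 F k _ _ x y HF)).
      f_equal; lia.
    + rewrite (Derive_ext _ (fun s => P F k (n1 + cnt true ds) (n2 + cnt false ds) x s)).
      2:{ intros; apply IH. }
      rewrite (is_derive_unique _ _ _ (dP2 F k _ _ x y HF)).
      f_equal; lia.
Qed.

Lemma cnt_app b l1 l2 : cnt b (l1 ++ l2) = (cnt b l1 + cnt b l2)%nat.
Proof. induction l1 as [|d l IH]; simpl; auto. destruct (Bool.eqb d b); simpl; auto. Qed.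

Lemma cnt_repeat b c n : cnt b (repeat c n) = if Bool.eqb c b then n else O.
Proof. induction n; simpl. destruct (Bool.eqb c b); auto. destruct (Bool.eqb c b); auto. Qed.

Lemma D12_P (F : R -> R) k g1 g2 x y : smooth1 F ->
  D12 g1 g2 (P F k 0 0) x y = P F k g1 g2 x y.
Proof.
  intros HF. unfold D12. rewrite dpart_P; auto.
  rewrite !cnt_app, !cnt_repeat. simpl. f_equal; lia.
Qed.

Lemma dpart_ext ds (f g : R -> R -> R) : (forall x y, f x y = g x y) ->
  forall x y, dpart ds f x y = dpart ds g x y.
Proof.
  intros H. induction ds as [|d ds IH]; intros x y; simpl; auto.
  destruct d; apply Derive_ext; intros; apply IH.
Qed.

Lemma pow_abs_le1 z n : Rabs z <= 1 -> Rabs (z ^ n) <= 1.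
Proof.
  intros H. rewrite <- RPow_abs. rewrite <- (pow1 n). apply pow_incr. split; auto. apply Rabs_pos.
Qed.

Lemma pp_bound n1 n2 t : 0 <= t <= 1 -> Rabs (pp n1 n2 t) <= 1.
Proof.
  intros Ht. unfold pp. rewrite Rabs_mult.
  rewrite <- (Rmult_1_l 1). apply Rmult_le_compat; try apply Rabs_pos;
  apply pow_abs_le1; apply Rabs_le; lra.
Qed.

Lemma Dn_bounded (F : R -> R) m R0 : smooth1 F ->
  exists B, 0 <= B /\ forall z, - R0 <= z <= R0 -> Rabs (Derive_n F m z) <= B.
Proof.
  intros HF. destruct (Rle_dec (- R0) R0) as [Hle|Hnle].
  - destruct (continuity_ab_maj (fun z => Rabs (Derive_n F m z)) (- R0) R0 Hle) as [z0 [Hz0 _]].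
    { intros c _. apply continuity_pt_filterlim.
      apply (continuous_comp (Derive_n F m) Rabs). apply cont_Dn; auto.
      apply continuous_Rabs. }
    exists (Rabs (Derive_n F m z0)). split. apply Rabs_pos. auto.
  - exists 0. split. lra. intros z Hz. lra.
Qed.

Lemma Dn_lip (F : R -> R) m R0 : smooth1 F ->
  exists B, 0 <= B /\ forall a b, - R0 <= a <= R0 -> - R0 <= b <= R0 ->
    Rabs (Derive_n F m a - Derive_n F m b) <= B * Rabs (a - b).
Proof.
  intros HF. destruct (Dn_bounded F (S m) R0 HF) as [B [HB HB2]].
  exists B. split; auto. intros a b Ha Hb.
  destruct (MVT_gen (Derive_n F m) b a (Derive_n F (S m))) as [c [Hc Heq]].
  - intros z _. simpl. apply Derive_correct. apply HF.
  - intros z _. apply continuity_pt_filterlim. apply cont_Dn; auto.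
  - rewrite Heq, Rabs_mult. apply Rmult_le_compat_r. apply Rabs_pos.
    apply HB2. destruct Hc as [Hc1 Hc2].
    split. eapply Rle_trans; [|apply Hc1]. apply Rmin_glb; lra.
    eapply Rle_trans; [apply Hc2|]. apply Rmax_lub; lra.
Qed.

Lemma cont2d_P (F : R -> R) k n1 n2 x y : smooth1 F ->
  continuity_2d_pt (P F k n1 n2) x y.
Proof.
  intros HF eps.
  set (m := (k + S (n1 + n2))%nat).
  set (R0 := Rabs x + Rabs y + 2).
  destruct (Dn_lip F m R0 HF) as [B [HB HL]].
  assert (Hd : 0 < Rmin 1 (eps / (3 * B + 3))).
  { apply Rmin_pos. lra. apply Rdiv_lt_0_compat. destruct eps; simpl; lra. lra. }
  exists (mkposreal _ Hd). intros u v Hu Hv. simpl in Hu, Hv.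
  assert (Hu1 : Rabs (u - x) < 1) by (eapply Rlt_le_trans; [apply Hu|apply Rmin_l]).
  assert (Hv1 : Rabs (v - y) < 1) by (eapply Rlt_le_trans; [apply Hv|apply Rmin_l]).
  assert (Hu2 : Rabs (u - x) < eps / (3 * B + 3)) by (eapply Rlt_le_trans; [apply Hu|apply Rmin_r]).
  assert (Hv2 : Rabs (v - y) < eps / (3 * B + 3)) by (eapply Rlt_le_trans; [apply Hv|apply Rmin_r]).
  unfold P. fold m.
  assert (E : RInt (fun t => pp n1 n2 t * Derive_n F m (ell u v t)) 0 1 -
              RInt (fun t => pp n1 n2 t * Derive_n F m (ell x y t)) 0 1 =
              RInt (fun t => minus (pp n1 n2 t * Derive_n F m (ell u v t)) (pp n1 n2 t * Derive_n F m (ell x y t))) 0 1).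
  { rewrite (@RInt_minus R_CompleteNormedModule). reflexivity.
    apply exRInt_integrand; auto. apply cont_pp. apply exRInt_integrand; auto. apply cont_pp. }
  rewrite E. clear E.
  eapply Rle_lt_trans.
  { apply (abs_RInt_le_const _ 0 1 (B * (Rabs (u - x) + 2 * Rabs (v - y)))). lra.
    apply (@ex_RInt_minus R_NormedModule); apply exRInt_integrand; auto; apply cont_pp.
    intros t Ht. unfold minus, plus, opp; simpl.
    replace (pp n1 n2 t * Derive_n F m (ell u v t) + - (pp n1 n2 t * Derive_n F m (ell x y t)))
      with (pp n1 n2 t * (Derive_n F m (ell u v t) - Derive_n F m (ell x y t))) by ring.
    rewrite Rabs_mult. rewrite <- (Rmult_1_l (B * _)).
    apply Rmult_le_compat; try apply Rabs_pos. apply pp_bound; auto.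
    assert (Hell : forall a b, Rabs (ell a b t) <= Rabs a + Rabs b).
    { intros a b. unfold ell. replace (- b + (a + b) * t) with (t * a + (1 - t) * (- b)) by ring.
      eapply Rle_trans. apply Rabs_triang. rewrite !Rabs_mult, Rabs_Ropp.
      rewrite (Rabs_pos_eq t), (Rabs_pos_eq (1 - t)) by lra.
      assert (0 <= Rabs a) by apply Rabs_pos. assert (0 <= Rabs b) by apply Rabs_pos. nra. }
    assert (Hux : Rabs u <= Rabs x + 1).
    { replace u with (x + (u - x)) by ring. eapply Rle_trans. apply Rabs_triang. lra. }
    assert (Hvy : Rabs v <= Rabs y + 1).
    { replace v with (y + (v - y)) by ring. eapply Rle_trans. apply Rabs_triang. lra. }
    eapply Rle_trans. apply HL.
    - pose proof (Hell u v). apply Rabs_le_between. unfold R0 in *. lra.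
    - pose proof (Hell x y). apply Rabs_le_between. unfold R0 in *. lra.
    - apply Rmult_le_compat_l; auto.
      unfold ell. replace (- v + (u + v) * t - (- y + (x + y) * t)) with (t * (u - x) + (t - 1) * (v - y)) by ring.
      eapply Rle_trans. apply Rabs_triang. rewrite !Rabs_mult.
      rewrite (Rabs_pos_eq t) by lra. rewrite (Rabs_left1 (t - 1)) by lra.
      assert (0 <= Rabs (u - x)) by apply Rabs_pos. assert (0 <= Rabs (v - y)) by apply Rabs_pos. nra. }
  assert (0 <= Rabs (u - x)) by apply Rabs_pos. assert (0 <= Rabs (v - y)) by apply Rabs_pos.
  assert (Heps : B * (3 * (eps / (3 * B + 3))) < eps).
  { destruct eps as [e He]; simpl. field_simplify. apply Rmult_lt_reg_r with (3 * B + 3). lra.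
    unfold Rdiv. rewrite Rmult_assoc, Rinv_l by lra. nra. lra. }
  nra.
Qed.

Lemma Dn_F (a : R -> R) : smooth1 a -> forall k z,
  Derive_n (fun x => x * a x) (S k) z = INR (S k) * Derive_n a k z + z * Derive_n a (S k) z.
Proof.
  intros Ha k. induction k as [|k IH]; intros z.
  - change (Derive (fun x => x * a x) z = INR 1 * a z + z * Derive a z).
    apply is_derive_unique.
    assert (H := Derive_correct a z (Ha O z)).
    replace (INR 1 * a z + z * Derive a z) with (plus (mult 1 (a z)) (mult z (Derive a z))).
    apply (is_derive_mult (fun x => x) a z 1 (Derive a z)).
    + apply (is_derive_id z).
    + apply H.
    + intros; apply Rmult_comm.
    + unfold plus, mult; simpl. ring.
  - change (Derive_n (fun x => x * a x) (S (S k)) z) with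
      (Derive (Derive_n (fun x => x * a x) (S k)) z).
    rewrite (Derive_ext _ (fun z => INR (S k) * Derive_n a k z + z * Derive_n a (S k) z)) by apply IH.
    apply is_derive_unique.
    assert (H1 := Derive_correct _ z (Ha k z)).
    assert (H2 := Derive_correct _ z (Ha (S k) z)).
    evar (l : R).
    replace (INR (S (S k)) * Derive_n a (S k) z + z * Derive_n a (S (S k)) z) with l.
    + apply (is_derive_plus (fun z => INR (S k) * Derive_n a k z) (fun z => z * Derive_n a (S k) z)).
      apply (is_derive_scal (Derive_n a k)). apply H1.
      apply (is_derive_mult (fun x => x) (Derive_n a (S k))). apply is_derive_id. apply H2.
      intros; apply Rmult_comm.
    + unfold l. rewrite (S_INR (S k)). cbn [Derive_n]. unfold plus, mult, scal; simpl. unfold mult; simpl. change (@one R_Ring) with 1. unfold one; simpl. ring.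
Qed.

Lemma smooth_F (a : R -> R) : smooth1 a -> smooth1 (fun x => x * a x).
Proof.
  intros Ha n z. destruct n as [|k].
  - simpl. eexists. apply (is_derive_mult (fun x => x) a z 1 (Derive a z)).
    apply (is_derive_id z). apply Derive_correct, (Ha O z). intros; apply Rmult_comm.
  - apply (ex_derive_ext (fun z => INR (S k) * Derive_n a k z + z * Derive_n a (S k) z)).
    { intros; symmetry; apply Dn_F; auto. }
    apply (ex_derive_plus (fun z => INR (S k) * Derive_n a k z) (fun z => z * Derive_n a (S k) z)).
    apply (ex_derive_scal (Derive_n a k)). apply Ha.
    apply (ex_derive_mult (fun x => x) (Derive_n a (S k))). apply ex_derive_id. apply Ha.
Qed.

Lemma smooth2_P (F : R -> R) k : smooth1 F -> smooth2 (P F k 0 0).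
Proof.
  intros HF ds. split.
  - intros x y. split.
    + eapply ex_derive_ext. intros s. symmetry. apply dpart_P; auto.
      eexists. apply dP1; auto.
    + eapply ex_derive_ext. intros s. symmetry. apply dpart_P; auto.
      eexists. apply dP2; auto.
  - intros x y.
    eapply continuous_ext. intros p. symmetry. apply dpart_P; auto.
    simpl. apply (continuity_2d_pt_filterlim (P F k (0 + cnt true ds) (0 + cnt false ds))).
    apply cont2d_P; auto.
Qed.

Definition dpp (n1 n2 : nat) (t : R) : R :=
  INR n1 * t ^ (pred n1) * (t - 1) ^ n2 + INR n2 * t ^ n1 * (t - 1) ^ (pred n2).

Lemma is_derive_pp n1 n2 t : is_derive (pp n1 n2) t (dpp n1 n2 t).
Proof. unfold pp, dpp. auto_derive; auto. replace (t + - (1)) with (t - 1) by ring. ring. Qed.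

Lemma cont_dpp n1 n2 t : continuous (dpp n1 n2) t.
Proof. apply (@ex_derive_continuous R_AbsRing R_NormedModule). unfold dpp. auto_derive. auto. Qed.

Lemma IBP (F : R -> R) k n1 n2 x y : smooth1 F ->
  (x + y) * P F k n1 n2 x y =
  pp n1 n2 1 * Derive_n F (k + (n1 + n2)) x - pp n1 n2 0 * Derive_n F (k + (n1 + n2)) (- y)
  - RInt (fun t => dpp n1 n2 t * Derive_n F (k + (n1 + n2)) (ell x y t)) 0 1.
Proof.
  intros HF. set (H := Derive_n F (k + (n1 + n2))).
  set (phi := fun t => pp n1 n2 t * H (ell x y t)).
  set (dphi := fun t => dpp n1 n2 t * H (ell x y t) + (x + y) * (pp n1 n2 t * Derive_n F (k + S (n1 + n2)) (ell x y t))).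
  assert (Hd : forall t, is_derive phi t (dphi t)).
  { intros t. unfold phi, dphi.
    replace (k + S (n1 + n2))%nat with (S (k + (n1 + n2))) by lia.
    assert (Hl : is_derive (ell x y) t (x + y)). { unfold ell. auto_derive; auto; ring. }
    assert (HH : is_derive H (ell x y t) (Derive_n F (S (k + (n1 + n2))) (ell x y t))).
    { unfold H. simpl. apply Derive_correct, HF. }
    pose proof (is_derive_comp H (ell x y) t _ _ HH Hl) as Hc.
    assert (Hm : is_derive (fun t => mult (pp n1 n2 t) (H (ell x y t))) t
      (plus (mult (dpp n1 n2 t) (H (ell x y t))) (mult (pp n1 n2 t) (scal (x + y) (Derive_n F (S (k + (n1 + n2))) (ell x y t)))))).
    { apply (is_derive_mult (pp n1 n2) (fun t => H (ell x y t))). apply is_derive_pp. apply Hc.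
      intros; apply Rmult_comm. }
    replace (dpp n1 n2 t * H (ell x y t) + (x + y) * (pp n1 n2 t * Derive_n F (S (k + (n1 + n2))) (ell x y t)))
      with (plus (mult (dpp n1 n2 t) (H (ell x y t))) (mult (pp n1 n2 t) (scal (x + y) (Derive_n F (S (k + (n1 + n2))) (ell x y t))))).
    exact Hm.
    unfold plus, mult, scal; simpl; unfold mult; simpl. ring. }
  assert (HI := is_RInt_derive phi dphi 0 1 (fun t _ => Hd t)).
  assert (HI' : is_RInt dphi 0 1 (minus (phi 1) (phi 0))).
  { apply HI. intros t _. unfold dphi.
    apply (continuous_plus (fun t => dpp n1 n2 t * H (ell x y t))).
    apply cont_integrand; auto. apply cont_dpp.
    apply (continuous_mult (fun _ => x + y) (fun t => pp n1 n2 t * _)).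
    apply continuous_const. apply cont_integrand; auto. apply cont_pp. }
  apply (@is_RInt_unique R_CompleteNormedModule) in HI'.
  unfold dphi in HI'.
  rewrite (@RInt_plus R_CompleteNormedModule (fun t => dpp n1 n2 t * H (ell x y t))) in HI'.
  2: apply exRInt_integrand; auto; apply cont_dpp.
  2: apply (@ex_RInt_scal R_CompleteNormedModule (fun t => pp n1 n2 t * _)); apply exRInt_integrand; auto; apply cont_pp.
  rewrite (@RInt_scal R_CompleteNormedModule (fun t => pp n1 n2 t * _)) in HI'.
  2: apply exRInt_integrand; auto; apply cont_pp.
  unfold P. unfold phi, minus, plus, opp, scal in HI'; simpl in HI'. unfold mult in HI'; simpl in HI'.
  assert (E1 : ell x y 1 = x) by (unfold ell; ring).
  assert (E0 : ell x y 0 = - y) by (unfold ell; ring).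
  rewrite E1, E0 in HI'. fold H. lra.
Qed.

Lemma RInt_dpp (F : R -> R) k n1 n2 x y : smooth1 F ->
  RInt (fun t => dpp n1 n2 t * Derive_n F (k + (n1 + n2)) (ell x y t)) 0 1 =
  INR n1 * P F k (pred n1) n2 x y + INR n2 * P F k n1 (pred n2) x y.
Proof.
  intros HF. unfold P.
  rewrite (RInt_ext _ (fun t => plus (scal (INR n1) (pp (pred n1) n2 t * Derive_n F (k + S (pred n1 + n2)) (ell x y t)))
                                   (scal (INR n2) (pp n1 (pred n2) t * Derive_n F (k + S (n1 + pred n2)) (ell x y t))))).
  2:{ intros t _. unfold plus, scal; simpl; unfold mult; simpl. unfold dpp, pp.
      destruct n1 as [|m1]; destruct n2 as [|m2]; cbn [pred]; change (INR 0) with 0.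
      - ring.
      - replace (k + S (0 + m2))%nat with (k + (0 + S m2))%nat by lia. ring.
      - replace (k + S (m1 + 0))%nat with (k + (S m1 + 0))%nat by lia. ring.
      - replace (k + S (m1 + S m2))%nat with (k + (S m1 + S m2))%nat by lia.
        replace (k + S (S m1 + m2))%nat with (k + (S m1 + S m2))%nat by lia. ring. }
  assert (E1 := exRInt_integrand F (pp (pred n1) n2) (k + S (pred n1 + n2)) x y 0 1 HF (cont_pp _ _)).
  assert (E2 := exRInt_integrand F (pp n1 (pred n2)) (k + S (n1 + pred n2)) x y 0 1 HF (cont_pp _ _)).
  rewrite (@RInt_plus R_CompleteNormedModule).
  rewrite (@RInt_scal R_CompleteNormedModule _ _ _ _ E1).
  rewrite (@RInt_scal R_CompleteNormedModule _ _ _ _ E2). reflexivity.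
  apply (@ex_RInt_scal R_CompleteNormedModule); exact E1.
  apply (@ex_RInt_scal R_CompleteNormedModule); exact E2.
Qed.

Lemma IBP2 (F : R -> R) k n1 n2 x y : smooth1 F ->
  (x + y) * P F k n1 n2 x y =
  pp n1 n2 1 * Derive_n F (k + (n1 + n2)) x - pp n1 n2 0 * Derive_n F (k + (n1 + n2)) (- y)
  - (INR n1 * P F k (pred n1) n2 x y + INR n2 * P F k n1 (pred n2) x y).
Proof. intros HF. rewrite IBP, RInt_dpp; auto. Qed.

Lemma pow2_eq u : u ^ 2 = u * u.
Proof. ring. Qed.

Lemma sq_nonneg u : 0 <= u * u.
Proof. apply Rle_0_sqr. Qed.

Lemma Rabs_mult_self_sq u : Rabs u * Rabs u = u * u.
Proof. rewrite <- Rabs_mult. apply Rabs_pos_eq. apply sq_nonneg. Qed.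

Lemma jbr_ge1 u : 1 <= jbr u.
Proof. unfold jbr. rewrite <- sqrt_1 at 1. apply sqrt_le_1_alt. rewrite ?pow2_eq. pose proof (sq_nonneg u). lra. Qed.

Lemma jbr_pos u : 0 < jbr u.
Proof. pose proof (jbr_ge1 u). lra. Qed.

Lemma sq_le_abs u v : Rabs u <= Rabs v -> u * u <= v * v.
Proof.
  intros H. rewrite <- (Rabs_mult_self_sq u), <- (Rabs_mult_self_sq v).
  pose proof (Rabs_pos u). apply Rmult_le_compat; lra.
Qed.

Lemma jbr_mono u v : Rabs u <= Rabs v -> jbr u <= jbr v.
Proof.
  intros H. unfold jbr. apply sqrt_le_1_alt. rewrite ?pow2_eq.
  pose proof (sq_le_abs u v H). lra.
Qed.

Lemma jbr_opp u : jbr (- u) = jbr u.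
Proof. unfold jbr. f_equal. ring. Qed.

Lemma abs_le_jbr u : Rabs u <= jbr u.
Proof.
  unfold jbr. rewrite <- (sqrt_Rsqr (Rabs u)) by apply Rabs_pos.
  apply sqrt_le_1_alt. unfold Rsqr. rewrite Rabs_mult_self_sq. rewrite ?pow2_eq. lra.
Qed.

Lemma jbr_le_2 M : 1 <= M -> jbr M <= 2 * M.
Proof.
  intros H. unfold jbr. rewrite <- (sqrt_Rsqr (2 * M)) by lra.
  apply sqrt_le_1_alt. unfold Rsqr. rewrite ?pow2_eq.
  assert (1 <= M * M) by (rewrite <- (Rmult_1_l 1); apply Rmult_le_compat; lra). lra.
Qed.

Lemma jbr_half u M : 0 <= M -> M / 2 <= Rabs u -> jbr M <= 2 * jbr u.
Proof.
  intros H0 H. unfold jbr. rewrite <- (sqrt_Rsqr 2) by lra. rewrite <- sqrt_mult_alt by (unfold Rsqr; lra).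
  apply sqrt_le_1_alt. unfold Rsqr. rewrite ?pow2_eq.
  assert (M * M <= 4 * (u * u)).
  { rewrite <- (Rabs_mult_self_sq u). replace (4 * (Rabs u * Rabs u)) with ((2 * Rabs u) * (2 * Rabs u)) by ring.
    apply Rmult_le_compat; lra. }
  lra.
Qed.

Lemma jbr_le3 u : Rabs u <= 2 -> jbr u <= 3.
Proof.
  intros H. unfold jbr. rewrite <- (sqrt_Rsqr 3) by lra.
  apply sqrt_le_1_alt. unfold Rsqr. rewrite ?pow2_eq.
  rewrite <- (Rabs_mult_self_sq u). pose proof (Rabs_pos u).
  assert (Rabs u * Rabs u <= 2 * 2) by (apply Rmult_le_compat; lra). lra.
Qed.

Fixpoint Cq (K : R) (n : nat) : R := match n with O => 8 * K | S n => 4 * K + 16 * Cq K n end.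

Lemma Cq_nonneg K n : 0 <= K -> 0 <= Cq K n.
Proof. intros HK; induction n; simpl; lra. Qed.

Lemma pp_1_S n1 m2 : pp n1 (S m2) 1 = 0.
Proof. unfold pp. simpl. ring. Qed.

Lemma pp_0_S m1 n2 : pp (S m1) n2 0 = 0.
Proof. unfold pp. simpl. ring. Qed.

Lemma pp_00 t : pp 0 0 t = 1.
Proof. unfold pp. simpl. ring. Qed.

Lemma div_le1 a b : 0 < b -> a <= b -> a / b <= 1.
Proof. intros. apply Rmult_le_reg_r with b; auto. unfold Rdiv. rewrite Rmult_assoc, Rinv_l by lra. lra. Qed.

Lemma bnd_term (X J KA : R) (k m : nat) : 1 <= X <= J -> 0 <= KA -> (k <= 1)%nat ->
  KA / X ^ (k + m) * (X ^ (S m) * J ^ k / J) <= KA.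
Proof.
  intros HX HKA Hk. assert (0 < X ^ m) by (apply pow_lt; lra).
  destruct k as [|k'].
  - simpl. replace (KA / X ^ m * (X * X ^ m * 1 / J)) with (KA * (X / J)) by (field; repeat split; lra).
    rewrite <- (Rmult_1_r KA) at 2. apply Rmult_le_compat_l; auto.
    apply div_le1; lra.
  - assert (k' = 0%nat) by lia. subst. simpl.
    replace (KA / (X * X ^ m) * (X * X ^ m * (J * 1) / J)) with KA by (field; repeat split; lra). lra.
Qed.

Lemma TJ_le (X J Ta : R) : 1 <= X <= J -> 0 <= Ta -> X * Ta / J <= Ta.
Proof.
  intros HX HT. replace (X * Ta / J) with (Ta * (X / J)) by (field; repeat split; lra).
  rewrite <- (Rmult_1_r Ta) at 2. apply Rmult_le_compat_l; auto. apply div_le1; lra.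
Qed.

Lemma regionQ (F : R -> R) (x y M A J K : R) :
  smooth1 F -> 0 <= A -> 0 <= K -> 2 <= M -> M / 2 <= Rabs (x + y) ->
  Rabs x <= M -> Rabs y <= M -> J = jbr M ->
  (forall z, Rabs z <= M -> Rabs (F z) <= K * A * jbr z) ->
  (forall m z, (m <= 4)%nat -> Rabs z <= M -> Rabs (Derive_n F (S m) z) <= K * A / jbr z ^ m) ->
  forall n k n1 n2, (k <= 1)%nat -> (n1 + n2 = n)%nat -> (k + n <= 4)%nat ->
  Rabs (P F k n1 n2 x y) * (jbr x ^ n1 * jbr y ^ n2 * J ^ k) <= Cq K n * A.
Proof.
  intros HF HA HK HM Hs Hx Hy HJ HB0 HB.
  set (X := jbr x). set (Y := jbr y).
  assert (HX1 : 1 <= X) by apply jbr_ge1. assert (HY1 : 1 <= Y) by apply jbr_ge1.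
  assert (HXJ : X <= J) by (rewrite HJ; apply jbr_mono; rewrite (Rabs_pos_eq M) by lra; auto).
  assert (HYJ : Y <= J) by (rewrite HJ; apply jbr_mono; rewrite (Rabs_pos_eq M) by lra; auto).
  assert (HJs : J <= 4 * Rabs (x + y)) by (rewrite HJ; pose proof (jbr_le_2 M); lra).
  assert (HJ0 : 0 < J) by lra.
  assert (Hdiv : forall n1 n2 k, Rabs (P F k n1 n2 x y) * J <=
     4 * (Rabs (pp n1 n2 1) * Rabs (Derive_n F (k + (n1 + n2)) x) + Rabs (pp n1 n2 0) * Rabs (Derive_n F (k + (n1 + n2)) (- y))
          + INR n1 * Rabs (P F k (pred n1) n2 x y) + INR n2 * Rabs (P F k n1 (pred n2) x y))).
  { intros a1 a2 kk. apply Rle_trans with (4 * Rabs ((x + y) * P F kk a1 a2 x y)).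
    { rewrite Rabs_mult. pose proof (Rabs_pos (P F kk a1 a2 x y)). nra. }
    apply Rmult_le_compat_l. lra. rewrite IBP2; auto.
    pose proof (pos_INR a1). pose proof (pos_INR a2).
    set (u1 := pp a1 a2 1). set (u2 := pp a1 a2 0). set (h1 := Derive_n F (kk + (a1 + a2)) x).
    set (h2 := Derive_n F (kk + (a1 + a2)) (- y)). set (p1 := P F kk (pred a1) a2 x y). set (p2 := P F kk a1 (pred a2) x y).
    eapply Rle_trans. apply Rabs_triang. rewrite Rabs_Ropp.
    eapply Rle_trans. apply Rplus_le_compat_r. apply Rabs_triang. rewrite Rabs_Ropp.
    eapply Rle_trans. apply Rplus_le_compat_l. apply Rabs_triang.
    rewrite !Rabs_mult. rewrite !(Rabs_pos_eq (INR _)) by auto. lra. }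
  assert (HBx : forall m, (m <= 4)%nat -> Rabs (Derive_n F (S m) x) <= K * A / X ^ m) by (intros; apply HB; auto).
  assert (HBy : forall m, (m <= 4)%nat -> Rabs (Derive_n F (S m) (- y)) <= K * A / Y ^ m).
  { intros. unfold Y. rewrite <- jbr_opp. apply HB; auto. rewrite Rabs_Ropp; auto. }
  assert (HXp : forall m, 0 < X ^ m) by (intros; apply pow_lt; lra).
  assert (HYp : forall m, 0 < Y ^ m) by (intros; apply pow_lt; lra).
  assert (HJp : forall m, 0 < J ^ m) by (intros; apply pow_lt; lra).
  assert (Hpp1 : forall a1 a2, Rabs (pp a1 a2 1) <= 1) by (intros; apply pp_bound; lra).
  assert (Hpp0 : forall a1 a2, Rabs (pp a1 a2 0) <= 1) by (intros; apply pp_bound; lra).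
  assert (HF0x : Rabs (F x) <= K * A * X) by (apply HB0; auto).
  assert (HF0y : Rabs (F (- y)) <= K * A * Y).
  { unfold Y. rewrite <- jbr_opp. apply HB0. rewrite Rabs_Ropp; auto. }
  assert (HKA : 0 <= K * A) by (apply Rmult_le_pos; auto).
  induction n as [|n IH]; intros k n1 n2 Hk Hn Hkn.
  - assert (n1 = 0%nat) by lia. assert (n2 = 0%nat) by lia. subst n1 n2.
    pose proof (Hdiv 0%nat 0%nat k) as Hd. change (INR 0) with 0 in Hd.
    replace (k + (0 + 0))%nat with k in Hd by lia. simpl Cq. simpl pow. rewrite !Rmult_1_l.
    pose proof (Hpp1 0%nat 0%nat). pose proof (Hpp0 0%nat 0%nat).
    destruct k as [|k'].
    + simpl pow. rewrite Rmult_1_r. simpl Derive_n in Hd.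
      apply Rmult_le_reg_r with J; auto.
      assert (Rabs (pp 0 0 1) * Rabs (F x) <= K * A * J).
      { eapply Rle_trans. apply Rmult_le_compat; try apply Rabs_pos. apply Hpp1. apply HF0x.
        rewrite Rmult_1_l. apply Rmult_le_compat_l; auto. }
      assert (Rabs (pp 0 0 0) * Rabs (F (- y)) <= K * A * J).
      { eapply Rle_trans. apply Rmult_le_compat; try apply Rabs_pos. apply Hpp0. apply HF0y.
        rewrite Rmult_1_l. apply Rmult_le_compat_l; auto. }
      lra.
    + assert (k' = 0%nat) by lia. subst k'. simpl pow. rewrite Rmult_1_r.
      assert (H1 := HBx 0%nat ltac:(lia)). assert (H2 := HBy 0%nat ltac:(lia)).
      simpl pow in H1, H2. rewrite Rdiv_1_r in H1, H2.
      assert (Rabs (pp 0 0 1) * Rabs (Derive_n F 1 x) <= K * A).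
      { rewrite <- (Rmult_1_l (K * A)). apply Rmult_le_compat; try apply Rabs_pos; auto. }
      assert (Rabs (pp 0 0 0) * Rabs (Derive_n F 1 (- y)) <= K * A).
      { rewrite <- (Rmult_1_l (K * A)). apply Rmult_le_compat; try apply Rabs_pos; auto. }
      lra.
  - assert (HCq := Cq_nonneg K n HK).
    assert (HnA : 0 <= Cq K n * A) by (apply Rmult_le_pos; auto).
    simpl Cq.
    destruct n1 as [|m1]; destruct n2 as [|m2]; try lia.
    +
      pose proof (Hdiv 0%nat (S m2) k) as Hd. rewrite pp_1_S, Rabs_R0 in Hd. change (INR 0) with 0 in Hd.
      set (T := X ^ 0 * Y ^ S m2 * J ^ k).
      assert (HT : 0 <= T) by (unfold T; pose proof (HXp 0%nat); pose proof (HYp (S m2)); pose proof (HJp k); apply Rmult_le_pos; [apply Rmult_le_pos|]; lra).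
      assert (E : Rabs (P F k 0 (S m2) x y) * T = (Rabs (P F k 0 (S m2) x y) * J) * (T / J)) by (field; repeat split; lra).
      rewrite E. clear E.
      assert (HTJ : 0 <= T / J) by (apply Rdiv_le_0_compat; lra).
      eapply Rle_trans. apply Rmult_le_compat_r. auto. apply Hd.
      assert (C2 : Rabs (pp 0 (S m2) 0) * Rabs (Derive_n F (k + (0 + S m2)) (- y)) * (T / J) <= K * A).
      { replace (k + (0 + S m2))%nat with (S (k + m2)) by lia.
        eapply Rle_trans. apply Rmult_le_compat_r. auto.
        apply Rmult_le_compat; try apply Rabs_pos. apply Hpp0. apply HBy. lia.
        rewrite Rmult_1_l. unfold T. simpl pow at 1. rewrite Rmult_1_l. apply bnd_term; auto; lra. }
      assert (C4 : INR (S m2) * Rabs (P F k 0 (pred (S m2)) x y) * (T / J) <= INR (S m2) * (Cq K n * A)).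
      { rewrite Rmult_assoc. apply Rmult_le_compat_l. apply pos_INR. simpl pred.
        apply Rle_trans with (Rabs (P F k 0 m2 x y) * (X ^ 0 * Y ^ m2 * J ^ k)).
        apply Rmult_le_compat_l. apply Rabs_pos. unfold T. simpl pow.
        replace (1 * (Y * Y ^ m2) * J ^ k) with (Y * (1 * Y ^ m2 * J ^ k)) by ring.
        apply TJ_le. lra. pose proof (HYp m2); pose proof (HJp k); nra.
        apply IH; lia. }
      assert (HI : INR (S m2) <= 4) by (replace 4 with (INR 4) by (simpl; lra); apply le_INR; lia).
      assert (INR (S m2) * (Cq K n * A) <= 4 * (Cq K n * A)) by (apply Rmult_le_compat_r; auto).
      nra.
    +
      pose proof (Hdiv (S m1) 0%nat k) as Hd. rewrite pp_0_S, Rabs_R0 in Hd. change (INR 0) with 0 in Hd.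
      set (T := X ^ S m1 * Y ^ 0 * J ^ k).
      assert (HT : 0 <= T) by (unfold T; pose proof (HXp (S m1)); pose proof (HYp 0%nat); pose proof (HJp k); apply Rmult_le_pos; [apply Rmult_le_pos|]; lra).
      assert (E : Rabs (P F k (S m1) 0 x y) * T = (Rabs (P F k (S m1) 0 x y) * J) * (T / J)) by (field; repeat split; lra).
      rewrite E. clear E.
      assert (HTJ : 0 <= T / J) by (apply Rdiv_le_0_compat; lra).
      eapply Rle_trans. apply Rmult_le_compat_r. auto. apply Hd.
      assert (C1 : Rabs (pp (S m1) 0 1) * Rabs (Derive_n F (k + (S m1 + 0)) x) * (T / J) <= K * A).
      { replace (k + (S m1 + 0))%nat with (S (k + m1)) by lia.
        eapply Rle_trans. apply Rmult_le_compat_r. auto.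
        apply Rmult_le_compat; try apply Rabs_pos. apply Hpp1. apply HBx. lia.
        rewrite Rmult_1_l. unfold T. simpl pow at 2. rewrite Rmult_1_r. apply bnd_term; auto; lra. }
      assert (C3 : INR (S m1) * Rabs (P F k (pred (S m1)) 0 x y) * (T / J) <= INR (S m1) * (Cq K n * A)).
      { rewrite Rmult_assoc. apply Rmult_le_compat_l. apply pos_INR. simpl pred.
        apply Rle_trans with (Rabs (P F k m1 0 x y) * (X ^ m1 * Y ^ 0 * J ^ k)).
        apply Rmult_le_compat_l. apply Rabs_pos. unfold T. simpl pow.
        replace (X * X ^ m1 * 1 * J ^ k) with (X * (X ^ m1 * 1 * J ^ k)) by ring.
        apply TJ_le. lra. pose proof (HXp m1); pose proof (HJp k); nra.
        apply IH; lia. }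
      assert (HI : INR (S m1) <= 4) by (replace 4 with (INR 4) by (simpl; lra); apply le_INR; lia).
      assert (INR (S m1) * (Cq K n * A) <= 4 * (Cq K n * A)) by (apply Rmult_le_compat_r; auto).
      nra.
    +
      pose proof (Hdiv (S m1) (S m2) k) as Hd. rewrite pp_0_S, pp_1_S, Rabs_R0 in Hd.
      set (T := X ^ S m1 * Y ^ S m2 * J ^ k).
      assert (HT : 0 <= T) by (unfold T; pose proof (HXp (S m1)); pose proof (HYp (S m2)); pose proof (HJp k); apply Rmult_le_pos; [apply Rmult_le_pos|]; lra).
      assert (E : Rabs (P F k (S m1) (S m2) x y) * T = (Rabs (P F k (S m1) (S m2) x y) * J) * (T / J)) by (field; repeat split; lra).
      rewrite E. clear E.
      assert (HTJ : 0 <= T / J) by (apply Rdiv_le_0_compat; lra).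
      eapply Rle_trans. apply Rmult_le_compat_r. auto. apply Hd.
      assert (C3 : INR (S m1) * Rabs (P F k (pred (S m1)) (S m2) x y) * (T / J) <= INR (S m1) * (Cq K n * A)).
      { rewrite Rmult_assoc. apply Rmult_le_compat_l. apply pos_INR. simpl pred.
        apply Rle_trans with (Rabs (P F k m1 (S m2) x y) * (X ^ m1 * Y ^ S m2 * J ^ k)).
        apply Rmult_le_compat_l. apply Rabs_pos. unfold T. simpl pow at 1.
        replace (X * X ^ m1 * Y ^ S m2 * J ^ k) with (X * (X ^ m1 * Y ^ S m2 * J ^ k)) by ring.
        apply TJ_le. lra. pose proof (HXp m1); pose proof (HYp (S m2)); pose proof (HJp k);
          apply Rmult_le_pos; [apply Rmult_le_pos|]; lra.
        apply IH; lia. }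
      assert (C4 : INR (S m2) * Rabs (P F k (S m1) (pred (S m2)) x y) * (T / J) <= INR (S m2) * (Cq K n * A)).
      { rewrite Rmult_assoc. apply Rmult_le_compat_l. apply pos_INR. simpl pred.
        apply Rle_trans with (Rabs (P F k (S m1) m2 x y) * (X ^ S m1 * Y ^ m2 * J ^ k)).
        apply Rmult_le_compat_l. apply Rabs_pos. unfold T. simpl pow at 2.
        replace (X ^ S m1 * (Y * Y ^ m2) * J ^ k) with (Y * (X ^ S m1 * Y ^ m2 * J ^ k)) by ring.
        apply TJ_le. lra. pose proof (HXp (S m1)); pose proof (HYp m2); pose proof (HJp k);
          apply Rmult_le_pos; [apply Rmult_le_pos|]; lra.
        apply IH; lia. }
      assert (HI : INR (S m1) + INR (S m2) <= 4) by (rewrite <- plus_INR; replace 4 with (INR 4) by (simpl; lra); apply le_INR; lia).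
      assert ((INR (S m1) + INR (S m2)) * (Cq K n * A) <= 4 * (Cq K n * A)) by (apply Rmult_le_compat_r; auto).
      nra.
Qed.

Lemma ell_le x y t : 0 <= t <= 1 -> Rabs (ell x y t) <= Rmax (Rabs x) (Rabs y).
Proof.
  intros Ht. unfold ell. replace (- y + (x + y) * t) with (t * x + (1 - t) * (- y)) by ring.
  eapply Rle_trans. apply Rabs_triang. rewrite !Rabs_mult, Rabs_Ropp.
  rewrite (Rabs_pos_eq t), (Rabs_pos_eq (1 - t)) by lra.
  pose proof (Rmax_l (Rabs x) (Rabs y)). pose proof (Rmax_r (Rabs x) (Rabs y)).
  pose proof (Rabs_pos x). pose proof (Rabs_pos y). nra.
Qed.

Lemma ell_ge x y t : 0 <= t <= 1 -> Rmax (Rabs x) (Rabs y) - Rabs (x + y) <= Rabs (ell x y t).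
Proof.
  intros Ht. unfold ell, Rmax. destruct (Rle_dec (Rabs x) (Rabs y)).
  - replace (- y + (x + y) * t) with (- y + t * (x + y)) by ring.
    pose proof (Rabs_triang_inv (- y) (- (t * (x + y)))).
    replace (- y - - (t * (x + y))) with (- y + t * (x + y)) in H by ring.
    rewrite Rabs_Ropp, Rabs_Ropp, Rabs_mult, (Rabs_pos_eq t) in H by lra.
    pose proof (Rabs_pos (x + y)). nra.
  - replace (- y + (x + y) * t) with (x - (1 - t) * (x + y)) by ring.
    pose proof (Rabs_triang_inv x ((1 - t) * (x + y))).
    rewrite Rabs_mult, (Rabs_pos_eq (1 - t)) in H by lra.
    pose proof (Rabs_pos (x + y)). nra.
Qed.

Lemma pow3_le (X Y J W : R) n1 n2 k : 0 <= X <= W -> 0 <= Y <= W -> 0 <= J <= W ->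
  X ^ n1 * Y ^ n2 * J ^ k <= W ^ (k + (n1 + n2)).
Proof.
  intros HX HY HJ. rewrite !pow_add.
  replace (W ^ k * (W ^ n1 * W ^ n2)) with (W ^ n1 * W ^ n2 * W ^ k) by ring.
  pose proof (pow_le X n1 (proj1 HX)). pose proof (pow_le Y n2 (proj1 HY)). pose proof (pow_le J k (proj1 HJ)).
  apply Rmult_le_compat. apply Rmult_le_pos; auto. auto.
  apply Rmult_le_compat; auto; apply pow_incr; auto. apply pow_incr; auto.
Qed.

Lemma regionI (F : R -> R) (x y M A J K : R) :
  smooth1 F -> 0 <= A -> 0 <= K -> M = Rmax (Rabs x) (Rabs y) -> J = jbr M ->
  (M <= 2 \/ Rabs (x + y) <= M / 2) ->
  (forall m z, (m <= 4)%nat -> Rabs z <= M -> Rabs (Derive_n F (S m) z) <= K * A / jbr z ^ m) ->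
  forall k n1 n2, (k + (n1 + n2) <= 4)%nat ->
  Rabs (P F k n1 n2 x y) * (jbr x ^ n1 * jbr y ^ n2 * J ^ k) <= 81 * K * A.
Proof.
  intros HF HA HK HM HJ Hcase HB k n1 n2 Hkn.
  set (T := jbr x ^ n1 * jbr y ^ n2 * J ^ k).
  assert (HM0 : 0 <= M) by (rewrite HM; eapply Rle_trans; [apply Rabs_pos|apply Rmax_l]).
  assert (Hx : Rabs x <= M) by (rewrite HM; apply Rmax_l).
  assert (Hy : Rabs y <= M) by (rewrite HM; apply Rmax_r).
  assert (HT : 0 < T).
  { unfold T. apply Rmult_lt_0_compat. apply Rmult_lt_0_compat. 1,2: apply pow_lt, jbr_pos.
    apply pow_lt. rewrite HJ; apply jbr_pos. }
  assert (HKA : 0 <= K * A) by (apply Rmult_le_pos; auto).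
  assert (Hint : forall t, 0 <= t <= 1 ->
     Rabs (pp n1 n2 t * Derive_n F (k + S (n1 + n2)) (ell x y t)) <= 81 * K * A / T).
  { intros t Ht. rewrite Rabs_mult.
    set (W := jbr (ell x y t)).
    assert (HW : 1 <= W) by apply jbr_ge1.
    assert (Hl : Rabs (ell x y t) <= M) by (rewrite HM; apply ell_le; auto).
    replace (k + S (n1 + n2))%nat with (S (k + (n1 + n2))) by lia.
    assert (HD := HB (k + (n1 + n2))%nat (ell x y t) Hkn Hl). fold W in HD.
    assert (HWp : 0 < W ^ (k + (n1 + n2))) by (apply pow_lt; lra).
    assert (HTW : T <= 81 * W ^ (k + (n1 + n2))).
    { destruct Hcase as [H2|H2].
      - apply Rle_trans with (3 ^ (k + (n1 + n2))).
        + unfold T. apply pow3_le.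
          * split. pose proof (jbr_pos x); lra. apply jbr_le3; lra.
          * split. pose proof (jbr_pos y); lra. apply jbr_le3; lra.
          * rewrite HJ. split. pose proof (jbr_pos M); lra. apply jbr_le3. rewrite Rabs_pos_eq; lra.
        + apply Rle_trans with (3 ^ 4). apply Rle_pow; try lra; lia.
          rewrite <- (Rmult_1_r (3 ^ 4)). apply Rmult_le_compat. lra. lra. simpl; lra.
          apply pow_R1_Rle; lra.
      - assert (HlM : M / 2 <= Rabs (ell x y t)).
        { pose proof (ell_ge x y t Ht). rewrite <- HM in H. lra. }
        assert (HJW : J <= 2 * W) by (rewrite HJ; apply jbr_half; auto).
        apply Rle_trans with ((2 * W) ^ (k + (n1 + n2))).
        + unfold T. apply pow3_le.
          * split. pose proof (jbr_pos x); lra. eapply Rle_trans; [|apply HJW]. rewrite HJ; apply jbr_mono. rewrite (Rabs_pos_eq M); lra.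
          * split. pose proof (jbr_pos y); lra. eapply Rle_trans; [|apply HJW]. rewrite HJ; apply jbr_mono. rewrite (Rabs_pos_eq M); lra.
          * split. rewrite HJ; pose proof (jbr_pos M); lra. auto.
        + rewrite Rpow_mult_distr. apply Rmult_le_compat_r. lra.
          apply Rle_trans with (2 ^ 4). apply Rle_pow; try lra; lia. simpl; lra. }
    apply Rle_trans with (1 * (K * A / W ^ (k + (n1 + n2)))).
    apply Rmult_le_compat; try apply Rabs_pos; auto. apply pp_bound; auto.
    rewrite Rmult_1_l.
    set (e := (k + (n1 + n2))%nat) in *.
    apply Rmult_le_reg_r with (T * W ^ e). apply Rmult_lt_0_compat; auto.
    assert (E1 : K * A / W ^ e * (T * W ^ e) = K * A * T) by (field; lra).
    assert (E2 : 81 * K * A / T * (T * W ^ e) = K * A * (81 * W ^ e)) by (field; lra).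
    rewrite E1, E2. apply Rmult_le_compat_l; auto. }
  unfold P.
  pose proof (abs_RInt_le_const _ 0 1 (81 * K * A / T) Rle_0_1
     (exRInt_integrand F (pp n1 n2) (k + S (n1 + n2)) x y 0 1 HF (cont_pp _ _)) Hint) as HI.
  rewrite Rminus_0_r, Rmult_1_l in HI.
  apply Rmult_le_reg_r with (/ T). apply Rinv_0_lt_compat; auto.
  rewrite Rmult_assoc, Rinv_r, Rmult_1_r by lra. auto.
Qed.

Lemma a_mono Cd cdy Cj a : condA Cd cdy Cj a -> forall u v, Rabs u <= Rabs v -> a u <= a v.
Proof.
  intros [Hpos [Hev [Hmon _]]] u v H.
  assert (Eu : a u = a (Rabs u)) by (unfold Rabs; destruct (Rcase_abs u); auto; rewrite Hev; auto).
  assert (Ev : a v = a (Rabs v)) by (unfold Rabs; destruct (Rcase_abs v); auto; rewrite Hev; auto).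
  rewrite Eu, Ev. apply Hmon. split; auto. apply Rabs_pos.
Qed.

Lemma deriv_sign a z : smooth1 a -> (forall u v, Rabs u <= Rabs v -> a u <= a v) -> 0 <= z * Derive a z.
Proof.
  intros Ha Hm.
  assert (HD := Derive_correct a z (Ha O z)).
  apply is_derive_Reals in HD. set (l := Derive a z) in *.
  destruct (Rtotal_order z 0) as [Hz|[Hz|Hz]].
  -
    destruct (Rle_dec l 0) as [Hl|Hl]. nra. exfalso.
    destruct (HD l ltac:(lra)) as [d Hd].
    set (h := Rmin d (- z) / 2).
    assert (Hh : 0 < h) by (unfold h; apply Rdiv_lt_0_compat; [apply Rmin_pos; [apply cond_pos|lra]|lra]).
    assert (Hh2 : h < d) by (unfold h; pose proof (Rmin_l d (- z)); pose proof (cond_pos d); lra).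
    assert (Hh3 : h < - z) by (unfold h; pose proof (Rmin_r d (- z)); lra).
    specialize (Hd h ltac:(lra) ltac:(rewrite Rabs_pos_eq; lra)).
    assert (Ha2 : a (z + h) <= a z) by (apply Hm; rewrite !Rabs_left; lra).
    assert ((a (z + h) - a z) / h <= 0).
    { unfold Rdiv. apply Rmult_le_0_r... lra. left; apply Rinv_0_lt_compat; auto. }
    apply Rabs_def2 in Hd. lra.
  - subst. lra.
  - destruct (Rle_dec 0 l) as [Hl|Hl]. nra. exfalso.
    destruct (HD (- l) ltac:(lra)) as [d Hd].
    set (h := d / 2).
    assert (Hh : 0 < h) by (unfold h; pose proof (cond_pos d); lra).
    specialize (Hd h ltac:(lra) ltac:(rewrite Rabs_pos_eq; unfold h; pose proof (cond_pos d); lra)).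
    assert (Ha2 : a z <= a (z + h)) by (apply Hm; rewrite !Rabs_pos_eq; lra).
    assert (0 <= (a (z + h) - a z) / h).
    { unfold Rdiv. apply Rmult_le_pos. lra. left; apply Rinv_0_lt_compat; auto. }
    apply Rabs_def2 in Hd. lra.
Qed.

Lemma abs_div_jbr z : Rabs z / jbr z <= 1.
Proof. apply Rmult_le_reg_r with (jbr z). apply jbr_pos. unfold Rdiv. rewrite Rmult_assoc, Rinv_l, Rmult_1_r, Rmult_1_l. apply abs_le_jbr. pose proof (jbr_pos z); lra. Qed.

Lemma F_bound0 a z : (forall x, 0 < a x) -> Rabs (z * a z) <= a z * jbr z.
Proof.
  intros Hp. rewrite Rabs_mult, (Rabs_pos_eq (a z)) by (left; auto).
  rewrite Rmult_comm. apply Rmult_le_compat_l. left; auto. apply abs_le_jbr.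
Qed.

Lemma F_bound Cd cdy Cj a : smooth1 a -> condA Cd cdy Cj a -> 0 < Cj ->
  forall m z, (m <= 4)%nat ->
  Rabs (Derive_n (fun x => x * a x) (S m) z) <= (6 * Cj + 1) * a z / jbr z ^ m.
Proof.
  intros Ha HA HCj m z Hm.
  destruct HA as [Hp [_ [_ [_ [_ [_ Hd]]]]]].
  rewrite Dn_F; auto.
  assert (HJ := jbr_pos z). assert (Hpz := Hp z).
  assert (HJm : 0 < jbr z ^ m) by (apply pow_lt; auto).
  assert (T2 : Rabs (z * Derive_n a (S m) z) <= Cj * a z / jbr z ^ m).
  { rewrite Rabs_mult. assert (H := Hd (S m) z ltac:(lia)).
    apply Rle_trans with (Rabs z * (Cj * a z / jbr z ^ S m)).
    apply Rmult_le_compat_l; auto. apply Rabs_pos.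
    replace (Rabs z * (Cj * a z / jbr z ^ S m)) with ((Rabs z / jbr z) * (Cj * a z / jbr z ^ m)) by (simpl; field; lra).
    rewrite <- (Rmult_1_l (Cj * a z / jbr z ^ m)) at 2. apply Rmult_le_compat_r.
    apply Rdiv_le_0_compat; [nra|auto]. apply abs_div_jbr. }
  assert (T1 : Rabs (INR (S m) * Derive_n a m z) <= (5 * Cj + 1) * a z / jbr z ^ m).
  { destruct m as [|m'].
    - simpl. rewrite Rmult_1_l, Rabs_pos_eq by lra. unfold Rdiv. rewrite Rinv_1. nra.
    - rewrite Rabs_mult, Rabs_pos_eq by apply pos_INR.
      assert (H := Hd (S m') z ltac:(lia)).
      assert (HI : INR (S (S m')) <= 5) by (replace 5 with (INR 5) by (simpl; lra); apply le_INR; lia).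
      apply Rle_trans with (5 * (Cj * a z / jbr z ^ S m')).
      apply Rmult_le_compat; auto. apply pos_INR. apply Rabs_pos.
      unfold Rdiv. assert (0 < / jbr z ^ S m') by (apply Rinv_0_lt_compat; auto). nra. }
  eapply Rle_trans. apply Rabs_triang.
  replace ((6 * Cj + 1) * a z / jbr z ^ m) with ((5 * Cj + 1) * a z / jbr z ^ m + Cj * a z / jbr z ^ m) by (field; lra).
  lra.
Qed.

Lemma q_formula (F : R -> R) x y : smooth1 F -> x + y <> 0 ->
  P F 0 0 0 x y = (F x - F (- y)) / (x + y).
Proof.
  intros HF Hs. pose proof (IBP2 F 0 0 0 x y HF) as H.
  rewrite !pp_00 in H. change (INR 0) with 0 in H. simpl Derive_n in H.
  apply Rmult_eq_reg_l with (x + y); auto. rewrite H. field; auto.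
Qed.

Lemma P_diff (F : R -> R) x y : smooth1 F ->
  P F 0 1 0 x y - P F 0 0 1 x y = P F 1 0 0 x y.
Proof.
  intros HF. unfold P.
  assert (E1 := exRInt_integrand F (pp 1 0) (0 + S (1 + 0)) x y 0 1 HF (cont_pp _ _)).
  assert (E2 := exRInt_integrand F (pp 0 1) (0 + S (0 + 1)) x y 0 1 HF (cont_pp _ _)).
  transitivity (RInt (fun t => minus (pp 1 0 t * Derive_n F (0 + S (1 + 0)) (ell x y t)) (pp 0 1 t * Derive_n F (0 + S (0 + 1)) (ell x y t))) 0 1).
  rewrite (@RInt_minus R_CompleteNormedModule). reflexivity. exact E1. exact E2.
  apply RInt_ext. intros t _. unfold minus, plus, opp; simpl. unfold pp. simpl. ring.
Qed.

Lemma D1_F_bounds Cd cdy Cj a z : smooth1 a -> condA Cd cdy Cj a -> 0 < Cj ->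
  a z <= Derive_n (fun x => x * a x) 1 z <= (6 * Cj + 1) * a z.
Proof.
  intros Ha HA HCj. split.
  - rewrite Dn_F; auto. change (Derive_n a 1 z) with (Derive a z). change (Derive_n a 0 z) with (a z). replace (INR 1) with 1 by reflexivity.
    pose proof (deriv_sign a z Ha (a_mono _ _ _ _ HA)). lra.
  - pose proof (F_bound Cd cdy Cj a Ha HA HCj 0 z ltac:(lia)) as H.
    simpl pow in H. rewrite Rdiv_1_r in H. apply Rabs_le_between in H. lra.
Qed.

Lemma q_upper Cd cdy Cj a x y : smooth1 a -> condA Cd cdy Cj a -> 0 < Cj ->
  P (fun x => x * a x) 0 0 0 x y <= (6 * Cj + 1) * a (ximax x y).
Proof.
  intros Ha HA HCj. set (F := fun x => x * a x). assert (HF := smooth_F a Ha).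
  unfold P. apply Rle_trans with (RInt (fun _ => (6 * Cj + 1) * a (ximax x y)) 0 1).
  - apply RInt_le. lra. apply exRInt_integrand; auto. apply cont_pp.
    apply ex_RInt_const.
    intros t Ht. rewrite pp_00, Rmult_1_l. simpl plus.
    pose proof (D1_F_bounds Cd cdy Cj a (ell x y t) Ha HA HCj).
    assert (a (ell x y t) <= a (ximax x y)).
    { apply (a_mono _ _ _ _ HA). unfold ximax. rewrite (Rabs_pos_eq (Rmax _ _)).
      apply ell_le; lra. eapply Rle_trans; [apply Rabs_pos|apply Rmax_l]. }
    assert (0 <= 6 * Cj + 1) by lra.
    unfold F. change (0 + S (0 + 0))%nat with 1%nat. nra.
  - rewrite RInt_const. unfold scal; simpl; unfold mult; simpl. lra.
Qed.

Lemma q_lower Cd cdy Cj a x y : smooth1 a -> condA Cd cdy Cj a -> 0 < Cj -> 0 < Cd ->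
  a (ximax x y) <= 4 * (Cd + 1) * P (fun x => x * a x) 0 0 0 x y.
Proof.
  intros Ha HA HCj HCd. set (F := fun x => x * a x). assert (HF := smooth_F a Ha).
  set (M := ximax x y). set (A := a M).
  assert (Hpos : forall z, 0 < a z) by (destruct HA; auto).
  assert (Hhalf : A <= (Cd + 1) * a (M / 2)).
  { destruct HA as [_ [_ [_ [_ [H2 _]]]]].
    assert (HM0 : 0 <= M) by (unfold M, ximax; eapply Rle_trans; [apply Rabs_pos|apply Rmax_l]).
    destruct (Req_dec M 0) as [E|E].
    - unfold A. rewrite E. replace (0 / 2) with 0 by field. pose proof (Hpos 0). nra.
    - pose proof (H2 (M / 2) ltac:(lra)). replace (2 * (M / 2)) with M in H by field.
      pose proof (Hpos (M / 2)). unfold A. nra. }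
  assert (Hgood : forall t, 0 <= t <= 1 -> M / 2 <= Rabs (ell x y t) -> A / (Cd + 1) <= Derive_n F (0 + S (0 + 0)) (ell x y t) * pp 0 0 t).
  { intros t Ht Hl. rewrite pp_00, Rmult_1_r. change (0 + S (0 + 0))%nat with 1%nat.
    pose proof (D1_F_bounds Cd cdy Cj a (ell x y t) Ha HA HCj).
    assert (a (M / 2) <= a (ell x y t)).
    { apply (a_mono _ _ _ _ HA). rewrite Rabs_pos_eq. auto.
      unfold M, ximax. apply Rmult_le_pos; [eapply Rle_trans; [apply Rabs_pos|apply Rmax_l]|lra]. }
    apply Rle_trans with (a (M / 2)). apply Rmult_le_reg_r with (Cd + 1). lra.
    unfold Rdiv. rewrite Rmult_assoc, Rinv_l, Rmult_1_r by lra. lra. unfold F; lra. }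
  assert (Hnn : forall t, 0 <= Derive_n F (0 + S (0 + 0)) (ell x y t) * pp 0 0 t).
  { intros t. rewrite pp_00, Rmult_1_r. change (0 + S (0 + 0))%nat with 1%nat.
    pose proof (D1_F_bounds Cd cdy Cj a (ell x y t) Ha HA HCj). pose proof (Hpos (ell x y t)). unfold F; lra. }
  set (g := fun t => pp 0 0 t * Derive_n F (0 + S (0 + 0)) (ell x y t)).
  assert (Hg : forall u v, ex_RInt g u v) by (intros; apply exRInt_integrand; auto; apply cont_pp).
  assert (HAc : 0 < A / (Cd + 1)) by (apply Rdiv_lt_0_compat; [apply Hpos|lra]).
  assert (Hs : Rabs (x + y) <= 2 * M).
  { unfold M, ximax. eapply Rle_trans. apply Rabs_triang. pose proof (Rmax_l (Rabs x) (Rabs y)). pose proof (Rmax_r (Rabs x) (Rabs y)). lra. }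
  assert (Hq : A / (Cd + 1) / 4 <= P F 0 0 0 x y).
  { unfold P. fold g. destruct (Rle_dec (Rabs y) (Rabs x)) as [Hxy|Hxy].
    - assert (HMx : M = Rabs x) by (unfold M, ximax; rewrite Rmax_left; auto).
      rewrite <- (RInt_Chasles g 0 (3/4) 1) by auto. unfold plus; simpl.
      assert (0 <= RInt g 0 (3/4)).
      { assert (RInt (fun _ => 0) 0 (3/4) = 0) by (rewrite RInt_const; unfold scal; simpl; unfold mult; simpl; ring).
        apply Rle_trans with (RInt (fun _ => 0) 0 (3/4)). rewrite H; lra. apply RInt_le. lra. apply ex_RInt_const. auto.
        intros t Ht. unfold g. rewrite Rmult_comm. apply Hnn. }
      assert (A / (Cd + 1) / 4 <= RInt g (3/4) 1).
      { assert (RInt (fun _ => A / (Cd + 1)) (3/4) 1 = A / (Cd + 1) / 4) by (rewrite RInt_const; unfold scal; simpl; unfold mult; simpl; field; lra).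
        rewrite <- H0. apply RInt_le. lra. apply ex_RInt_const. auto.
        intros t Ht. unfold g. rewrite Rmult_comm. apply Hgood. lra.
        unfold ell. replace (- y + (x + y) * t) with (x - (1 - t) * (x + y)) by ring.
        pose proof (Rabs_triang_inv x ((1 - t) * (x + y))). rewrite Rabs_mult, (Rabs_pos_eq (1 - t)) in H1 by lra.
        pose proof (Rabs_pos (x + y)). nra. }
      lra.
    - assert (HMy : M = Rabs y) by (unfold M, ximax; rewrite Rmax_right; lra).
      rewrite <- (RInt_Chasles g 0 (1/4) 1) by auto. unfold plus; simpl.
      assert (0 <= RInt g (1/4) 1).
      { assert (RInt (fun _ => 0) (1/4) 1 = 0) by (rewrite RInt_const; unfold scal; simpl; unfold mult; simpl; ring).
        apply Rle_trans with (RInt (fun _ => 0) (1/4) 1). rewrite H; lra. apply RInt_le. lra. apply ex_RInt_const. auto.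
        intros t Ht. unfold g. rewrite Rmult_comm. apply Hnn. }
      assert (A / (Cd + 1) / 4 <= RInt g 0 (1/4)).
      { assert (RInt (fun _ => A / (Cd + 1)) 0 (1/4) = A / (Cd + 1) / 4) by (rewrite RInt_const; unfold scal; simpl; unfold mult; simpl; field; lra).
        rewrite <- H0. apply RInt_le. lra. apply ex_RInt_const. auto.
        intros t Ht. unfold g. rewrite Rmult_comm. apply Hgood. lra.
        unfold ell. replace (- y + (x + y) * t) with (- y - (- t) * (x + y)) by ring.
        pose proof (Rabs_triang_inv (- y) ((- t) * (x + y))). rewrite Rabs_mult, Rabs_Ropp, Rabs_Ropp, (Rabs_pos_eq t) in H1 by lra.
        pose proof (Rabs_pos (x + y)). nra. }
      lra. }
  apply Rmult_le_reg_r with (/ (4 * (Cd + 1))). apply Rinv_0_lt_compat; lra.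
  replace (4 * (Cd + 1) * P F 0 0 0 x y * / (4 * (Cd + 1))) with (P F 0 0 0 x y) by (field; lra).
  replace (A * / (4 * (Cd + 1))) with (A / (Cd + 1) / 4) by (field; lra). auto.
Qed.

Definition Cmax (K : R) : R := 81 * K + Cq K 0 + Cq K 1 + Cq K 2 + Cq K 3.

Lemma main_bound Cd cdy Cj a x y k g1 g2 : smooth1 a -> condA Cd cdy Cj a -> 0 < Cj ->
  (k <= 1)%nat -> (g1 + g2 <= 3)%nat ->
  Rabs (P (fun x => x * a x) k g1 g2 x y) * (jbr x ^ g1 * jbr y ^ g2 * jbr (ximax x y) ^ k)
   <= Cmax (6 * Cj + 1) * a (ximax x y).
Proof.
  intros Ha HA HCj Hk Hg.
  set (F := fun x => x * a x). assert (HF := smooth_F a Ha).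
  set (K := 6 * Cj + 1). set (M := ximax x y). set (A := a M). set (J := jbr M).
  assert (HK : 0 <= K) by (unfold K; lra).
  assert (Hpos : forall z, 0 < a z) by (destruct HA; auto).
  assert (HA0 : 0 <= A) by (left; apply Hpos).
  assert (HM : M = Rmax (Rabs x) (Rabs y)) by reflexivity.
  assert (Hx : Rabs x <= M) by (rewrite HM; apply Rmax_l).
  assert (Hy : Rabs y <= M) by (rewrite HM; apply Rmax_r).
  assert (HM0 : 0 <= M) by (eapply Rle_trans; [apply Rabs_pos|apply Hx]).
  assert (Hmono : forall z, Rabs z <= M -> a z <= A).
  { intros z Hz. apply (a_mono _ _ _ _ HA). rewrite (Rabs_pos_eq M); auto. }
  assert (HB : forall m z, (m <= 4)%nat -> Rabs z <= M -> Rabs (Derive_n F (S m) z) <= K * A / jbr z ^ m).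
  { intros m z Hm Hz. eapply Rle_trans. apply (F_bound Cd cdy Cj a Ha HA HCj m z Hm).
    unfold Rdiv. apply Rmult_le_compat_r. left; apply Rinv_0_lt_compat, pow_lt, jbr_pos.
    apply Rmult_le_compat_l; auto. }
  assert (HB0 : forall z, Rabs z <= M -> Rabs (F z) <= K * A * jbr z).
  { intros z Hz. eapply Rle_trans. apply (F_bound0 a z Hpos).
    pose proof (jbr_pos z). pose proof (Hmono z Hz). pose proof (Hpos z).
    assert (E1 : a z * jbr z <= A * jbr z) by (apply Rmult_le_compat_r; lra).
    assert (E2 : 0 <= 6 * Cj * A * jbr z) by (repeat apply Rmult_le_pos; lra).
    unfold K. replace ((6 * Cj + 1) * A * jbr z) with (6 * Cj * A * jbr z + A * jbr z) by ring. lra. }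
  assert (HCq : forall n, (n <= 3)%nat -> Cq K n <= Cmax K).
  { intros n Hn. unfold Cmax. pose proof (Cq_nonneg K 0 HK). pose proof (Cq_nonneg K 1 HK).
    pose proof (Cq_nonneg K 2 HK). pose proof (Cq_nonneg K 3 HK).
    destruct n as [|[|[|[|n]]]]; try lia; lra. }
  destruct (Rle_dec M 2) as [H2|H2].
  - eapply Rle_trans. apply (regionI F x y M A J K HF HA0 HK HM eq_refl (or_introl H2) HB). lia.
    apply Rmult_le_compat_r; auto. unfold Cmax. pose proof (Cq_nonneg K 0 HK). pose proof (Cq_nonneg K 1 HK).
    pose proof (Cq_nonneg K 2 HK). pose proof (Cq_nonneg K 3 HK). lra.
  - destruct (Rle_dec (Rabs (x + y)) (M / 2)) as [Hs|Hs].
    + eapply Rle_trans. apply (regionI F x y M A J K HF HA0 HK HM eq_refl (or_intror Hs) HB). lia.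
      apply Rmult_le_compat_r; auto. unfold Cmax. pose proof (Cq_nonneg K 0 HK). pose proof (Cq_nonneg K 1 HK).
      pose proof (Cq_nonneg K 2 HK). pose proof (Cq_nonneg K 3 HK). lra.
    + eapply Rle_trans. apply (regionQ F x y M A J K HF HA0 HK ltac:(lra) ltac:(lra) Hx Hy eq_refl HB0 HB (g1 + g2) k g1 g2); lia.
      apply Rmult_le_compat_r; auto.
Qed.

Lemma div_form (p D c A C : R) : 0 < D -> 0 <= A -> c <= C -> p * D <= c * A -> p <= C * A / D.
Proof.
  intros HD HA Hc H. apply Rmult_le_reg_r with D; auto.
  unfold Rdiv. rewrite Rmult_assoc, Rinv_l, Rmult_1_r by lra.
  eapply Rle_trans. apply H. apply Rmult_le_compat_r; auto.
Qed.

Theorem lemma4p4 :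
  forall Cd cdy Cj : R, 0 < Cd -> 0 < cdy -> 0 < Cj ->
  exists C : R, 0 < C /\
  forall a : R -> R, smooth1 a -> condA Cd cdy Cj a ->
  exists q : R -> R -> R,
    smooth2 q /\
    (forall x y, x + y <> 0 -> q x y = (x * a x + y * a y) / (x + y)) /\
    (forall x y, 0 < q x y) /\
    (* (i) *)
    (forall x y, a (ximax x y) <= C * q x y /\ q x y <= C * a (ximax x y)) /\
    (forall (g1 g2 : nat) x y, (1 <= g1 + g2 <= 3)%nat ->
       Rabs (D12 g1 g2 q x y) <= C * a (ximax x y) / (jbr x ^ g1 * jbr y ^ g2)) /\
    (* (ii) *)
    (forall (g1 g2 : nat) x y, (g1 + g2 <= 3)%nat ->
       Rabs (D12 g1 g2 (fun s t => D12 1 0 q s t - D12 0 1 q s t) x y)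
         <= C * a (ximax x y) / (jbr x ^ g1 * jbr y ^ g2 * jbr (ximax x y))).
Proof.
  intros Cd cdy Cj HCd Hcdy HCj.
  set (K := 6 * Cj + 1).
  assert (HK : 1 <= K) by (unfold K; lra).
  assert (HCm : 0 <= Cmax K).
  { unfold Cmax. pose proof (Cq_nonneg K 0 ltac:(lra)). pose proof (Cq_nonneg K 1 ltac:(lra)).
    pose proof (Cq_nonneg K 2 ltac:(lra)). pose proof (Cq_nonneg K 3 ltac:(lra)). lra. }
  set (C := 4 * (Cd + 1) * (Cmax K + K)).
  assert (HC1 : Cmax K <= C) by (unfold C; nra).
  assert (HC2 : K <= C) by (unfold C; nra).
  assert (HC3 : 4 * (Cd + 1) <= C) by (unfold C; nra).
  exists C. split. lra.
  intros a Ha HA.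
  set (F := fun x => x * a x). assert (HF := smooth_F a Ha).
  assert (Hpos : forall z, 0 < a z) by (destruct HA; auto).
  assert (Hev : forall z, a (- z) = a z) by (destruct HA as [_ [H _]]; auto).
  exists (P F 0 0 0).
  assert (Hlow : forall x y, a (ximax x y) <= 4 * (Cd + 1) * P F 0 0 0 x y)
    by (intros; apply (q_lower Cd cdy Cj a); auto).
  assert (Hqpos : forall x y, 0 < P F 0 0 0 x y).
  { intros x y. pose proof (Hlow x y). pose proof (Hpos (ximax x y)).
    apply Rmult_lt_reg_l with (4 * (Cd + 1)). lra. lra. }
  split; [|split; [|split; [|split; [|split]]]].
  - apply smooth2_P; auto.
  - intros x y Hs. rewrite q_formula; auto. unfold F. rewrite Hev. f_equal. ring.
  - auto.
  - intros x y. split.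
    + eapply Rle_trans. apply Hlow. apply Rmult_le_compat_r. left; auto. auto.
    + eapply Rle_trans. apply (q_upper Cd cdy Cj a x y Ha HA HCj). apply Rmult_le_compat_r.
      left; auto. fold K. auto.
  - intros g1 g2 x y Hg. rewrite D12_P; auto.
    pose proof (main_bound Cd cdy Cj a x y 0 g1 g2 Ha HA HCj ltac:(lia) ltac:(lia)) as H.
    rewrite pow_O, Rmult_1_r in H.
    apply (div_form _ _ (Cmax K)); auto.
    apply Rmult_lt_0_compat; apply pow_lt, jbr_pos. left; auto.
  - intros g1 g2 x y Hg.
    unfold D12 at 1.
    rewrite (dpart_ext _ _ (P F 1 0 0)).
    2:{ intros s t. rewrite !D12_P; auto. apply P_diff; auto. }
    fold (D12 g1 g2 (P F 1 0 0) x y). rewrite D12_P; auto.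
    pose proof (main_bound Cd cdy Cj a x y 1 g1 g2 Ha HA HCj ltac:(lia) ltac:(lia)) as H.
    rewrite pow_1 in H.
    apply (div_form _ _ (Cmax K)); auto.
    repeat apply Rmult_lt_0_compat; try apply pow_lt; apply jbr_pos. left; auto.
Qed.
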